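(* Let $(b,c)\in\{(1,4),(4,1)\}$. (1) Let $x,y$ be non-commuting indeterminates and $C=xyx^{-1}y^{-1}$. Let $(R_n)_{n\in\mathbb Z}$ be the solution of the $(b,c)$-system with $C$ as the coefficient and initial data $R_0=yxy^{-1}$, $R_1=y$ (so that $CR_0=x$). Then for every $n\in\mathbb Z$, $R_n$ is a Laurent polynomial in $x,y$ with non-negative integer coefficients. (2) Let $X,Y$ be non-commuting indeterminates and $C=XYX^{-1}Y^{-1}$. Let $(R_n)_{n\in\mathbb Z}$ be the solution of the $(b,c)$-system with $C$ as the coefficient and initial data $R_1=YXY^{-1}$, $R_2=Y$ (so that $CR_1=X$). Then for every $n\in\mathbb Z$, $R_n$ is a Laurent polynomial in $X,Y$ with non-negative integer coefficients.
   Context: For two non-commuting indeterminates $u,v$ (here $u,v$ stands for $x,y$ or $X,Y$), work in the free skew field over $\mathbb C$ generated by $u,v$, i.e. the skew field of non-commutative rational functions in $u,v$. A (non-commutative) Laurent polynomial in $u,v$ is a $\mathbb Z$-linear combination of words (Laurent monomials) in $u^{\pm1},v^{\pm1}$. It has non-negative integer coefficients if all coefficients of its expansion in reduced words are in $\mathbb Z_{\ge 0}$. For non-negative integers $b,c$ and a given element $C$, the $(b,c)$-system is the recursion $$R_{n+1}\,C\,R_{n-1}=\begin{cases}1+R_n^{b}, & n\text{ odd},\\ 1+R_n^{c}, & n \text{ even},\end{cases}\qquad n\in\mathbb Z.$$ Given two consecutive values, this recursion determines $R_n$ uniquely for all $n\in\mathbb Z$. *)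

(* Defs.v *)
(* The integral group ring Z[F_2] of the free group on two
   generators, i.e. non-commutative Laurent polynomials in two variables. *)
From mathcomp Require Import all_boot all_order all_algebra.
Set Implicit Arguments. Unset Strict Implicit. Unset Printing Implicit Defensive.
Import GRing.Theory Num.Theory.
Local Open Scope ring_scope.

(* A letter: (generator, inverted?).  generator false = x (or X), true = y (or Y). *)
Definition letter := (bool * bool)%type.
Definition word := seq letter.
Definition inv_letter (l : letter) : letter := (l.1, ~~ l.2).

Fixpoint red (w : word) : word :=
  match w with
  | [::] => [::]
  | a :: w' =>
      match red w' with
      | b :: r' => if b == inv_letter a then r' else a :: b :: r'
      | [::] => [:: a]
      end
  end.

(* A Laurent polynomial is represented by a finite formal Z-combination of
   words; two representations are identified when all coefficients on
   reduced words agree. *)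
Definition LP := seq (int * word).

Definition coef (p : LP) (w : word) : int :=
  \sum_(t <- p | red t.2 == w) t.1.

Definition lp_eq (p q : LP) : Prop := forall w : word, coef p w = coef q w.

Definition lp_add (p q : LP) : LP := p ++ q.
Definition lp_mul (p q : LP) : LP :=
  [seq (t.1 * s.1, t.2 ++ s.2) | t <- p, s <- q].
Definition lp_one : LP := [:: (1, [::])].
Definition lp_pow (p : LP) (n : nat) : LP := iter n (lp_mul p) lp_one.
Definition lp_word (w : word) : LP := [:: (1, w)].

Definition lp_nonneg (p : LP) : Prop := forall w : word, 0 <= coef p w.

Definition gx : letter := (false, false).
Definition gxi : letter := (false, true).
Definition gy : letter := (true, false).
Definition gyi : letter := (true, true).

Definition Ccoef : LP := lp_word [:: gx; gy; gxi; gyi].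

Definition bc_system (b c : nat) (C : LP) (R : int -> LP) : Prop :=
  forall n : int,
    lp_eq (lp_mul (lp_mul (R (n + 1)) C) (R (n - 1)))
          (lp_add lp_one (lp_pow (R n) (if odd `|n|%N then b else c))).

(* Main.v *)
Require Import Defs.
From HB Require Import structures.
From mathcomp Require Import all_boot all_order all_algebra.
From mathcomp Require Import zify.
From Stdlib Require Import Lia.
Set Implicit Arguments. Unset Strict Implicit. Unset Printing Implicit Defensive.
Import GRing.Theory Num.Theory.
Local Open Scope ring_scope.

Definition step (a : letter) (s : word) : word :=
  match s with
  | b :: r' => if b == inv_letter a then r' else a :: b :: r'
  | [::] => [:: a]
  end.

Lemma red_cons a w : red (a :: w) = step a (red w).
Proof. by []. Qed.

Fixpoint rdc (w : word) : bool :=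
  match w with
  | a :: ((b :: _) as w') => (b != inv_letter a) && rdc w'
  | _ => true
  end.

Lemma inv_letterK l : inv_letter (inv_letter l) = l.
Proof. by case: l => a b; rewrite /inv_letter /= negbK. Qed.

Lemma inv_letter_inj : injective inv_letter.
Proof. by move=> l1 l2 h; rewrite -(inv_letterK l1) h inv_letterK. Qed.

Lemma rdc_tail a w : rdc (a :: w) -> rdc w.
Proof. by case: w => //= b w /andP[]. Qed.

Lemma rdc_step a s : rdc s -> rdc (step a s).
Proof.
case: s => [|b r] //= h.
case: ifP => e; first by move: h; case: r => //= c r /andP[].
by rewrite /= h andbT e.
Qed.

Lemma rdc_red w : rdc (red w).
Proof. elim: w => [|a w IH] //=; exact: (rdc_step a IH). Qed.

Lemma red_rdc w : rdc w -> red w = w.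
Proof.
elim: w => [|a w IH] // h; rewrite red_cons IH ?(rdc_tail h) //.
by case: w h {IH} => //= b r /andP[/negbTE -> _].
Qed.

Lemma red_red w : red (red w) = red w.
Proof. exact/red_rdc/rdc_red. Qed.

Lemma step_inv a t : rdc t -> step a (step (inv_letter a) t) = t.
Proof.
case: t => [|b r] /=; first by rewrite eqxx.
rewrite inv_letterK; case: eqP => [->|ne] h.
  case: r h => [|c r] //= /andP[ne' _]; by rewrite (negbTE ne').
by rewrite /= eqxx.
Qed.

Lemma red_catr u v : red (u ++ v) = red (u ++ red v).
Proof. elim: u => [|a u IH] /=; [by rewrite red_red | by rewrite IH]. Qed.

Lemma red_step_cat a s v : rdc s -> red (step a s ++ v) = step a (red (s ++ v)).
Proof.
case: s => [|b r] //= h.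
case: eqP => [->|_] //=.
rewrite step_inv //; apply: rdc_red.
Qed.

Lemma red_catl u v : red (u ++ v) = red (red u ++ v).
Proof.
elim: u => [|a u IH] //.
rewrite cat_cons !red_cons IH red_step_cat //; exact: rdc_red.
Qed.

Lemma red_cat u v : red (u ++ v) = red (red u ++ red v).
Proof. by rewrite red_catl red_catr. Qed.

Definition winv (w : word) : word := rev (map inv_letter w).

Lemma winv_cat u v : winv (u ++ v) = winv v ++ winv u.
Proof. by rewrite /winv map_cat rev_cat. Qed.

Lemma winvK w : winv (winv w) = w.
Proof. by rewrite /winv map_rev revK -map_comp map_id_in // => l _ /=; rewrite inv_letterK. Qed.

Lemma winv_cons a w : winv (a :: w) = winv w ++ [:: inv_letter a].
Proof. by rewrite /winv /= rev_cons cats1. Qed.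

Lemma red_winvr w : red (w ++ winv w) = [::].
Proof.
elim: w => [|a w IH] //.
rewrite winv_cons cat_cons red_cons catA red_catl IH /=.
by rewrite eqxx.
Qed.

Lemma red_winvl w : red (winv w ++ w) = [::].
Proof. by rewrite -{2}(winvK w) red_winvr. Qed.

Lemma red_eq_catr u v w : red u = red v -> red (u ++ w) = red (v ++ w).
Proof. by move=> h; rewrite red_catl h -red_catl. Qed.

Lemma red_eq_catl u v w : red u = red v -> red (w ++ u) = red (w ++ v).
Proof. by move=> h; rewrite red_catr h -red_catr. Qed.

Lemma red_mul_eqL u v w : red w = w ->
  (red (u ++ v) == w) = (red u == red (w ++ winv v)).
Proof.
move=> hw; apply/eqP/eqP => h.
  by rewrite -{}h -red_catl -catA red_catr red_winvr cats0.
by rewrite red_catl h -red_catl -catA red_catr red_winvl cats0 hw.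
Qed.

Lemma red_mul_eqR u v w : red w = w ->
  (red (u ++ v) == w) = (red v == red (winv u ++ w)).
Proof.
move=> hw; apply/eqP/eqP => h.
  by rewrite -{}h -red_catr catA red_catl red_winvl.
by rewrite red_catr h -red_catr catA red_catl red_winvr /= hw.
Qed.

Lemma coef_cat p q w : coef (p ++ q) w = coef p w + coef q w.
Proof. by rewrite /coef big_cat. Qed.

Lemma coef_nil w : coef [::] w = 0.
Proof. by rewrite /coef big_nil. Qed.

Lemma coef_nred p w : red w != w -> coef p w = 0.
Proof.
move=> hw; rewrite /coef big1 // => t /eqP ht.
by move: hw; rewrite -ht red_red eqxx.
Qed.

Lemma coef_mulL p q w : red w = w ->
  coef (lp_mul p q) w = \sum_(s <- q) coef p (red (w ++ winv s.2)) * s.1.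
Proof.
move=> hw; rewrite /coef /lp_mul big_mkcond big_allpairs_dep /= exchange_big /=.
apply: eq_bigr => s _; rewrite [in RHS]big_mkcond mulr_suml; apply: eq_bigr => t _.
by rewrite red_mul_eqL //; case: ifP; rewrite ?mul0r.
Qed.

Lemma coef_mulR p q w : red w = w ->
  coef (lp_mul p q) w = \sum_(t <- p) t.1 * coef q (red (winv t.2 ++ w)).
Proof.
move=> hw; rewrite /coef /lp_mul big_mkcond big_allpairs_dep /=.
apply: eq_bigr => t _; rewrite [in RHS]big_mkcond mulr_sumr; apply: eq_bigr => s _.
by rewrite red_mul_eqR //; case: ifP; rewrite ?mulr0.
Qed.

Lemma lp_eq_refl p : lp_eq p p. Proof. by []. Qed.
Lemma lp_eq_sym p q : lp_eq p q -> lp_eq q p. Proof. by move=> h w. Qed.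
Lemma lp_eq_trans p q r : lp_eq p q -> lp_eq q r -> lp_eq p r.
Proof. by move=> h1 h2 w; rewrite h1 h2. Qed.

Lemma lp_eq_cat p p' q q' : lp_eq p p' -> lp_eq q q' -> lp_eq (p ++ q) (p' ++ q').
Proof. by move=> h1 h2 w; rewrite !coef_cat h1 h2. Qed.

Lemma lp_eq_mulL p p' q : lp_eq p p' -> lp_eq (lp_mul p q) (lp_mul p' q).
Proof.
move=> h w; case: (eqVneq (red w) w) => hw; last by rewrite !coef_nred.
by rewrite !coef_mulL //; apply: eq_bigr => s _; rewrite h.
Qed.

Lemma lp_eq_mulR p q q' : lp_eq q q' -> lp_eq (lp_mul p q) (lp_mul p q').
Proof.
move=> h w; case: (eqVneq (red w) w) => hw; last by rewrite !coef_nred.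
by rewrite !coef_mulR //; apply: eq_bigr => s _; rewrite h.
Qed.

Lemma lp_eq_mul p p' q q' : lp_eq p p' -> lp_eq q q' -> lp_eq (lp_mul p q) (lp_mul p' q').
Proof. by move=> h1 h2; apply: lp_eq_trans (lp_eq_mulL _ h1) (lp_eq_mulR _ h2). Qed.

Definition lnum (l : letter) : nat := (2 * l.1 + l.2)%N.
Fixpoint code (w : word) : nat :=
  match w with [::] => 0%N | l :: w' => (4 * code w' + lnum l).+1 end.

Lemma lnum_lt l : (lnum l < 4)%N.
Proof. by case: l => [[] []]. Qed.

Lemma lnum_inj : injective lnum.
Proof. by move=> [[] []] [[] []]. Qed.

Lemma code_inj : injective code.
Proof.
elim=> [|a u IH] [|b v] //= [h].
have ha := lnum_lt a; have hb := lnum_lt b.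
have e1 : lnum a = lnum b by lia.
have e2 : code u = code v by lia.
by rewrite (lnum_inj e1) (IH _ e2).
Qed.

Definition leW (u v : word) : bool := (code u <= code v)%N.

Lemma leW_total : total leW.
Proof. by move=> u v; rewrite /leW leq_total. Qed.
Lemma leW_trans : transitive leW.
Proof. by move=> u v w; rewrite /leW; apply: leq_trans. Qed.
Lemma leW_anti : antisymmetric leW.
Proof. by move=> u v /andP[h1 h2]; apply: code_inj; apply/eqP; rewrite eqn_leq; apply/andP; split. Qed.

Definition supp (p : LP) : seq word :=
  sort leW (undup [seq w <- [seq red t.2 | t <- p] | coef p w != 0]).

Definition nf (p : LP) : LP := [seq (coef p w, w) | w <- supp p].

Lemma coef_notin p w : w \notin [seq red t.2 | t <- p] -> coef p w = 0.
Proof.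
move=> hn; rewrite /coef big1_seq // => t /andP[/eqP e tin].
by move: hn; rewrite -e (map_f (fun t : int * word => red t.2) tin).
Qed.

Lemma mem_supp0 p w :
  (w \in [seq w <- [seq red t.2 | t <- p] | coef p w != 0]) = (coef p w != 0).
Proof.
rewrite mem_filter; apply/andP/idP => [[]//|h]; split=> //.
by apply/negPn/negP => hn; move: h; rewrite coef_notin // eqxx.
Qed.

Lemma mem_supp p w : (w \in supp p) = (coef p w != 0).
Proof. by rewrite /supp mem_sort mem_undup mem_supp0. Qed.

Lemma uniq_supp p : uniq (supp p).
Proof. by rewrite /supp sort_uniq undup_uniq. Qed.

Lemma supp_red p w : w \in supp p -> red w = w.
Proof.
rewrite /supp mem_sort mem_undup mem_filter => /andP[_ /mapP[t _ ->]].
exact: red_red.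
Qed.

Lemma nf_coef p : lp_eq (nf p) p.
Proof.
move=> w; rewrite /nf [LHS]/coef big_map /=.
case: (eqVneq (red w) w) => hw; last first.
  rewrite (coef_nred p hw) big1_seq // => u /andP[/eqP e uin].
  by move: hw; rewrite -e red_red eqxx.
rewrite -big_filter.
have -> : [seq u <- supp p | red u == w] = [seq u <- supp p | u == w].
  apply: eq_in_filter => u uin; by rewrite (supp_red uin).
case: (boolP (w \in supp p)) => win.
  by rewrite filter_pred1_uniq ?uniq_supp // big_seq1.
have -> : [seq u <- supp p | u == w] = [::].
  apply/eqP; rewrite -(negbK (_ == _)) -has_filter; apply/hasPn => u uin.
  by apply/eqP => e; move: win; rewrite -e uin.
by rewrite big_nil; move: win; rewrite mem_supp negbK => /eqP ->.
Qed.

Lemma nf_eq p q : lp_eq p q -> nf p = nf q.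
Proof.
move=> h; rewrite /nf; have -> : supp p = supp q.
  rewrite /supp; apply/perm_sortP; [exact: leW_total | exact: leW_trans | exact: leW_anti |].
  apply: uniq_perm; rewrite ?undup_uniq // => w.
  by rewrite !mem_undup !mem_supp0 h.
by apply: eq_map => w; rewrite h.
Qed.

Lemma nf_eqE p q : (nf p = nf q) <-> lp_eq p q.
Proof.
split=> [h|]; last exact: nf_eq.
by apply: lp_eq_trans (lp_eq_sym (nf_coef p)) _; rewrite h; apply: nf_coef.
Qed.

Lemma nf_idem p : nf (nf p) = nf p.
Proof. exact/nf_eq/nf_coef. Qed.

Definition FG := {p : LP | nf p == p}.
HB.instance Definition _ := Choice.on FG.

Definition toT (p : LP) : FG := exist _ (nf p) (introT eqP (nf_idem p)).

Lemma toT_eqE p q : toT p = toT q <-> lp_eq p q.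
Proof.
split=> [h|h]; first by apply/nf_eqE; move: h => /(congr1 val).
by apply: val_inj; rewrite /= (nf_eq h).
Qed.

Lemma toTvalK (t : FG) : toT (val t) = t.
Proof. by apply: val_inj => /=; apply/eqP; case: t. Qed.

Lemma toT_nf p : toT (nf p) = toT p.
Proof. exact/toT_eqE/nf_coef. Qed.

Definition negLP (p : LP) : LP := [seq (- t.1, t.2) | t <- p].

Definition addT_def (s t : FG) : FG := toT (val s ++ val t).
Fact addT_key : unit. Proof. exact: tt. Qed.
Definition addT := locked_with addT_key addT_def.
Definition oppT_def (s : FG) : FG := toT (negLP (val s)).
Fact oppT_key : unit. Proof. exact: tt. Qed.
Definition oppT := locked_with oppT_key oppT_def.
Definition zeroT : FG := toT [::].
Definition mulT_def (s t : FG) : FG := toT (lp_mul (val s) (val t)).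
Fact mulT_key : unit. Proof. exact: tt. Qed.
Definition mulT := locked_with mulT_key mulT_def.
Definition oneT : FG := toT lp_one.

Lemma toT_cat p q : toT (p ++ q) = addT (toT p) (toT q).
Proof. rewrite [addT]unlock; by apply/toT_eqE/lp_eq_cat; apply/lp_eq_sym/nf_coef. Qed.

Lemma toT_mul p q : toT (lp_mul p q) = mulT (toT p) (toT q).
Proof. rewrite [mulT]unlock; by apply/toT_eqE/lp_eq_mul; apply/lp_eq_sym/nf_coef. Qed.

Lemma coef_neg p w : coef (negLP p) w = - coef p w.
Proof. by rewrite /negLP /coef big_map sumrN. Qed.

Lemma toT_neg p : toT (negLP p) = oppT (toT p).
Proof. by rewrite [oppT]unlock; apply/toT_eqE => w; rewrite !coef_neg nf_coef. Qed.

Lemma coef_lp_one w : red w = w -> coef lp_one w = if w == [::] then 1 else 0.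
Proof. by move=> hw; rewrite /coef big_cons big_nil addr0 /= eq_sym. Qed.

Lemma addTA : associative addT.
Proof.
move=> r s t; rewrite -[r]toTvalK -[s]toTvalK -[t]toTvalK -!toT_cat.
by rewrite catA.
Qed.

Lemma addTC : commutative addT.
Proof.
move=> s t; rewrite -[s]toTvalK -[t]toTvalK -!toT_cat.
by apply/toT_eqE => w; rewrite !coef_cat addrC.
Qed.

Lemma add0T : left_id zeroT addT.
Proof. by move=> t; rewrite -[t]toTvalK /zeroT -toT_cat. Qed.

Lemma addNT : left_inverse zeroT oppT addT.
Proof.
move=> t; rewrite -[t]toTvalK -toT_neg -toT_cat.
by apply/toT_eqE => w; rewrite coef_cat coef_neg coef_nil addNr.
Qed.

HB.instance Definition _ := GRing.isZmodule.Build FG addTA addTC add0T addNT.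

Lemma mulTA : associative mulT.
Proof.
move=> r s t; rewrite -[r]toTvalK -[s]toTvalK -[t]toTvalK -!toT_mul.
apply/toT_eqE => w; case: (eqVneq (red w) w) => hw; last by rewrite !coef_nred.
rewrite coef_mulL // [RHS]coef_mulL // [in RHS]/lp_mul big_allpairs_dep /= exchange_big /=.
apply: eq_bigr => u _; rewrite coef_mulL ?red_red // mulr_suml; apply: eq_bigr => s1 _.
rewrite mulrA; congr (_ * _); congr (_ * _).
by rewrite -red_catl winv_cat catA.
Qed.

Lemma mul1T : left_id oneT mulT.
Proof.
move=> t; rewrite -[t]toTvalK /oneT -toT_mul; apply/toT_eqE => w.
case: (eqVneq (red w) w) => hw; last by rewrite !coef_nred.
by rewrite coef_mulR // big_cons big_nil /= mul1r addr0 hw.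
Qed.

Lemma mulT1 : right_id oneT mulT.
Proof.
move=> t; rewrite -[t]toTvalK /oneT -toT_mul; apply/toT_eqE => w.
case: (eqVneq (red w) w) => hw; last by rewrite !coef_nred.
by rewrite coef_mulL // big_cons big_nil /= mulr1 addr0 cats0 hw.
Qed.

Lemma mulTDl : left_distributive mulT addT.
Proof.
move=> r s t; rewrite [mulT]unlock [addT]unlock; apply/toT_eqE => /=.
apply: lp_eq_trans (lp_eq_mulL _ (nf_coef _)) _.
by rewrite /lp_mul allpairs_cat; apply: lp_eq_cat; apply/lp_eq_sym/nf_coef.
Qed.

Lemma mulTDr : right_distributive mulT addT.
Proof.
move=> r s t; rewrite [mulT]unlock [addT]unlock; apply/toT_eqE => /=.
apply: lp_eq_trans (lp_eq_mulR _ (nf_coef _)) _.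
apply: lp_eq_trans _ (lp_eq_cat (lp_eq_sym (nf_coef _)) (lp_eq_sym (nf_coef _))).
move=> w; case: (eqVneq (red w) w) => hw; last by rewrite !coef_nred.
rewrite coef_cat !coef_mulR // -big_split /=; apply: eq_bigr => t1 _.
by rewrite coef_cat mulrDr.
Qed.

HB.instance Definition _ := GRing.Zmodule_isPzRing.Build FG mulTA mul1T mulT1 mulTDl mulTDr.

Lemma toT_add p q : toT (lp_add p q) = toT p + toT q.
Proof. exact: toT_cat. Qed.
Lemma toT_mulE p q : toT (lp_mul p q) = toT p * toT q.
Proof. exact: toT_mul. Qed.
Lemma toT_one : toT lp_one = 1.
Proof. by []. Qed.
Lemma toT_pow p n : toT (lp_pow p n) = toT p ^+ n.
Proof.
elim: n => [|n IH]; first by rewrite expr0.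
by rewrite exprS -IH /lp_pow iterS toT_mulE.
Qed.
Lemma toT_negE p : toT (negLP p) = - toT p.
Proof. exact: toT_neg. Qed.

Inductive nexp :=
| NAtom of nat | NInt of int | NAdd of nexp & nexp | NMul of nexp & nexp
| NOpp of nexp | NPow of nexp & nat.

Definition npoly := seq (int * seq nat).

Definition pmul (p q : npoly) : npoly := [seq (s.1 * t.1, s.2 ++ t.2) | s <- p, t <- q].

Fixpoint nnorm (e : nexp) : npoly :=
  match e with
  | NAtom n => [:: (1, [:: n])]
  | NInt z => [:: (z, [::])]
  | NAdd a b => nnorm a ++ nnorm b
  | NMul a b => pmul (nnorm a) (nnorm b)
  | NOpp a => [seq (- t.1, t.2) | t <- nnorm a]
  | NPow a n => iter n (pmul (nnorm a)) [:: (1, [::])]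
  end.

Section Eval.
Variable R : pzRingType.
Variable env : seq R.

Fixpoint neval (e : nexp) : R :=
  match e with
  | NAtom n => nth 0 env n
  | NInt z => z%:~R
  | NAdd a b => neval a + neval b
  | NMul a b => neval a * neval b
  | NOpp a => - neval a
  | NPow a n => neval a ^+ n
  end.

Definition evalm (m : seq nat) : R := foldr (fun i acc => nth 0 env i * acc) 1 m.
Definition evalp (p : npoly) : R := \sum_(t <- p) evalm t.2 *~ t.1.

Lemma evalm_cat u v : evalm (u ++ v) = evalm u * evalm v.
Proof. by elim: u => [|i u IH] /=; rewrite ?mul1r // IH mulrA. Qed.

Lemma evalp_cat p q : evalp (p ++ q) = evalp p + evalp q.
Proof. by rewrite /evalp big_cat. Qed.

Lemma evalp_mul p q : evalp (pmul p q) = evalp p * evalp q.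
Proof.
rewrite /evalp /pmul big_allpairs_dep /= mulr_suml; apply: eq_bigr => s _.
rewrite mulr_sumr; apply: eq_bigr => t _.
by rewrite evalm_cat mulrzAl mulrzAr -mulrzA mulrC.
Qed.

Lemma nnorm_sound e : evalp (nnorm e) = neval e.
Proof.
elim: e => [n|z|a IHa b IHb|a IHa b IHb|a IHa|a IHa n] /=.
- by rewrite /evalp big_cons big_nil addr0 /= mulr1 mulr1z.
- by rewrite /evalp big_cons big_nil addr0 /=.
- by rewrite evalp_cat IHa IHb.
- by rewrite evalp_mul IHa IHb.
- by rewrite /evalp big_map -IHa /evalp -sumrN; apply: eq_bigr => t _; rewrite mulrNz.
- elim: n => [|n IH]; first by rewrite /evalp big_cons big_nil addr0 /= expr0.
  by rewrite iterS evalp_mul IH IHa exprS.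
Qed.

Variable prs : seq (nat * nat).
Hypothesis hprs : forall i j, (i, j) \in prs -> nth 0 env i * nth 0 env j = 1.

Fixpoint mred (m : seq nat) : seq nat :=
  match m with
  | [::] => [::]
  | i :: m' => match mred m' with
               | j :: r => if (i, j) \in prs then r else i :: j :: r
               | [::] => [:: i]
               end
  end.

Lemma mred_sound m : evalm (mred m) = evalm m.
Proof.
elim: m => [|i m IH] //=; rewrite -IH.
case: (mred m) => [|j r] //=.
by case: ifP => // h; rewrite mulrA hprs // mul1r.
Qed.

Fixpoint csum (p : npoly) (m : seq nat) : int :=
  match p with
  | [::] => 0
  | s :: p' => if mred s.2 == m then s.1 + csum p' m else csum p' m
  end.

Definition npzero (p : npoly) : bool := all (fun t => csum p (mred t.2) == 0) p.

Lemma csumE p m : csum p m = \sum_(s <- p | mred s.2 == m) s.1.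
Proof. by elim: p => [|s p IH] /=; rewrite ?big_nil // big_cons IH. Qed.

Lemma npzero_sound p : npzero p -> evalp p = 0.
Proof.
move=> /allP hz.
have -> : evalp p = \sum_(t <- p) evalm (mred t.2) *~ t.1.
  by apply: eq_bigr => t _; rewrite mred_sound.
set U := undup [seq mred t.2 | t <- p].
have -> : \sum_(t <- p) evalm (mred t.2) *~ t.1 =
          \sum_(t <- p) \sum_(u <- U | mred t.2 == u) evalm (mred t.2) *~ t.1.
  apply: eq_big_seq => t tin; rewrite big_const_seq.
  have -> : count (fun u => mred t.2 == u) U = 1%N.
    have := count_uniq_mem (mred t.2) (undup_uniq [seq mred t.2 | t <- p]).
    rewrite mem_undup (map_f (fun t : int * seq nat => mred t.2) tin) => h.
    transitivity (count (pred1 (mred t.2)) U); last by rewrite h.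
    by apply: eq_count => u; rewrite /= eq_sym.
  by rewrite /= addr0.
under eq_bigr do rewrite big_mkcond.
rewrite exchange_big /= big1_seq // => u /andP[_ uin]; rewrite -big_mkcond /=.
have : u \in [seq mred t.2 | t <- p] by rewrite -mem_undup.
case/mapP => t0 t0in ->.
rewrite (eq_bigr (fun t => evalm (mred t0.2) *~ t.1)); last by move=> t /eqP ->.
by rewrite -mulrz_sumr -csumE (eqP (hz t0 t0in)) mulr0z.
Qed.

Lemma nc_eq e1 e2 : npzero (nnorm (NAdd e1 (NOpp e2))) -> neval e1 = neval e2.
Proof.
move=> h; apply/eqP; rewrite -subr_eq0; apply/eqP.
by have := npzero_sound h; rewrite nnorm_sound.
Qed.

End Eval.

Ltac nc_idx x l :=
  lazymatch l with
  | x :: _ => constr:(0%N)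
  | _ :: ?l' => let n := nc_idx x l' in constr:(S n)
  end.

Ltac nc_reify l t :=
  lazymatch t with
  | @Algebra.add _ ?u ?v =>
      let a := nc_reify l u in let b := nc_reify l v in constr:(NAdd a b)
  | @Algebra.opp _ ?u => let a := nc_reify l u in constr:(NOpp a)
  | @GRing.mul _ ?u ?v =>
      let a := nc_reify l u in let b := nc_reify l v in constr:(NMul a b)
  | @GRing.exp _ ?u ?n => let a := nc_reify l u in constr:(NPow a n)
  | GRing.one _ => constr:(NInt 1)
  | @Algebra.zero _ => constr:(NInt 0)
  | _ => let n := nc_idx t l in constr:(NAtom n)
  end.

(* l : env list with C at index 0 and Ci at index 1; h01 : C*Ci=1, h10: Ci*C=1 *)
Ltac nc_solve l h01 h10 :=
  lazymatch goal with
  | |- ?lhs = ?rhs =>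
    let e1 := nc_reify l lhs in
    let e2 := nc_reify l rhs in
    apply: (@nc_eq _ l [:: (0%N, 1%N); (1%N, 0%N)] _ e1 e2);
    [ let i := fresh in let j := fresh in let hi := fresh in
      move=> i j; rewrite !inE => /orP[] /eqP [-> ->] /=; [exact h01 | exact h10]
    | vm_compute; reflexivity ]
  end.

Section Test.
Variables (R : pzRingType) (C Ci a b : R) (h01 : C * Ci = 1) (h10 : Ci * C = 1).
Lemma test : (a + b) * C * Ci * (a - b) = a * a - a * b + b * a - b * b.
Proof. nc_solve [:: C; Ci; a; b] h01 h10. Qed.
End Test.

Section Gen.
Variables (R : pzRingType) (C Ci A B : R).
Hypotheses (h01 : C * Ci = 1) (h10 : Ci * C = 1).

Definition K := A + B.
Definition nxt a b := b * K - a * Ci.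
Definition iL a b := K * C * b - nxt a b - C * a.
Definition iL2 a b := K * C * a - C * a * K * C - b + C * b * C.
Definition iH a b := a * b - b * C * a - Ci + 1.
Definition iJ a b := nxt a b * C * a - b * b - K * C.
Definition Inv a b := [/\ iL a b = 0, iL2 a b = 0, iH a b = 0 & iJ a b = 0].

Ltac ncs a b := rewrite /iL /iL2 /iH /iJ /nxt /K; nc_solve [:: C; Ci; a; b; A; B] h01 h10.

Lemma Inv_step a b : Inv a b -> Inv b (nxt a b).
Proof.
case=> hL hL2 hH hJ; split.
- have -> : iL b (nxt a b) = iL a b * K - iL2 a b * Ci by ncs a b.
  by rewrite hL hL2 !mul0r subrr.
- have -> : iL2 b (nxt a b) = iL a b by ncs a b.
  exact: hL.
- have -> : iH b (nxt a b) = iH a b - b * iL a b by ncs a b.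
  by rewrite hH hL mulr0 subrr.
- have -> : iJ b (nxt a b) = iJ a b + nxt a b * iL a b by ncs a b.
  by rewrite hJ hL mulr0 addr0.
Qed.

Lemma X_rel a b : Inv a b -> iH b (nxt a b) = 0 ->
  (nxt a b * C * b - 1) * C * (b * C * a - 1) = 1 + b ^+ 4.
Proof.
case=> hL hL2 hH hJ hH'; apply/eqP; rewrite -subr_eq0; apply/eqP.
have -> : (nxt a b * C * b - 1) * C * (b * C * a - 1) - (1 + b ^+ 4) =
   - iH b (nxt a b) * C * (b * C * a - 1) + b * b * iJ a b - b * iH b (nxt a b) * C * a.
  by ncs a b.
by rewrite hH' hJ !(mul0r, mulr0, oppr0, add0r, subr0).
Qed.

Fixpoint apair (a0 a1 : R) (k : nat) : R * R :=
  match k with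
  | 0%N => (a0, a1)
  | k'.+1 => let p := apair a0 a1 k' in (p.2, nxt p.1 p.2)
  end.
Definition aseq a0 a1 k := (apair a0 a1 k).1.

Lemma aseqSS a0 a1 k : aseq a0 a1 k.+2 = nxt (aseq a0 a1 k) (aseq a0 a1 k.+1).
Proof. by []. Qed.

Lemma Inv_all a0 a1 : Inv a0 a1 -> forall k, Inv (aseq a0 a1 k) (aseq a0 a1 k.+1).
Proof. by move=> h; elim=> [|k IH] //; rewrite aseqSS; apply: Inv_step. Qed.

Lemma X_all a0 a1 : Inv a0 a1 -> forall k,
  let a := aseq a0 a1 in
  (a k.+2 * C * a k.+1 - 1) * C * (a k.+1 * C * a k - 1) = 1 + a k.+1 ^+ 4.
Proof.
move=> h k a; rewrite /a aseqSS; apply: X_rel; first exact: Inv_all.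
rewrite -aseqSS; by case: (Inv_all h k.+1).
Qed.

Variables (M M' : R).
Hypotheses (hM : M = A * B - Ci) (hM' : M' = B * C * A - 1).

Lemma pos_struct a0 a1 (P QR QL E : nat -> R) : Inv a0 a1 ->
  let a := aseq a0 a1 in
  P 0%N = a1 -> QR 0%N = a1 * B - a0 * Ci -> QL 0%N = B * C * a1 - C * a0 ->
  E 0%N = QR 0%N * C * a1 - 1 ->
  (forall j, P j.+1 = P j * A + QR j) ->
  (forall j, QR j.+1 = P j * M + QR j * B) ->
  (forall j, QL j.+1 = M' * C * P j + B * C * QL j) ->
  (forall j, E j.+1 = P j * M * C * A * C * P j + P j * M * C * QL j + E j
                     + QR j * M' * C * P j + QR j * B * C * QL j) ->
  forall j, [/\ P j = a j.+1, QR j = a j.+1 * B - a j * Ci,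
               QL j = B * C * a j.+1 - C * a j & E j = QR j * C * a j.+1 - 1].
Proof.
move=> hI a hP0 hQR0 hQL0 hE0 hP hQR hQL hE; elim=> [|j [e1 e2 e3 e4]].
  by split; rewrite // hP0.
have hL : iL (a j) (a j.+1) = 0 by case: (Inv_all hI j).
have ea : a j.+2 = nxt (a j) (a j.+1) by [].
move: hL; rewrite ea => hL.
split.
- rewrite hP e1 e2 /nxt /K; nc_solve [:: C; Ci; a j; a j.+1; A; B] h01 h10.
- rewrite hQR e1 e2 hM /nxt /K; nc_solve [:: C; Ci; a j; a j.+1; A; B] h01 h10.
- apply/eqP; rewrite -subr_eq0; apply/eqP.
  have -> : QL j.+1 - (B * C * nxt (a j) (a j.+1) - C * a j.+1) = (M' - (B * C * A - 1)) * C * a j.+1 + B * C * iL (a j) (a j.+1).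
    by rewrite hQL e1 e3 /iL /nxt /K; nc_solve [:: C; Ci; a j; a j.+1; A; B; M'] h01 h10.
  by rewrite hM' subrr hL !(mul0r, mulr0, add0r).
- apply/eqP; rewrite -subr_eq0; apply/eqP.
  have -> : E j.+1 - (QR j.+1 * C * nxt (a j) (a j.+1) - 1) = (a j.+1 * M + QR j * B) * C * iL (a j) (a j.+1).
    rewrite hE hQR e1 e3 e4 e2 hM hM' /iL /nxt /K.
    nc_solve [:: C; Ci; a j; a j.+1; A; B] h01 h10.
  by rewrite hL mulr0.
Qed.

Lemma odd_formula a0 a1 (P QR E : nat -> R) j :
  let a := aseq a0 a1 in
  P j = a j.+1 -> QR j = a j.+1 * B - a j * Ci -> E j = QR j * C * a j.+1 - 1 ->
  P j * A * C * P j + E j = a j.+2 * C * a j.+1 - 1.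
Proof.
move=> a e1 e2 e4; have ea : a j.+2 = nxt (a j) (a j.+1) by [].
rewrite ea e4 e2 e1.
rewrite /nxt /K; nc_solve [:: C; Ci; a j; a j.+1; A; B] h01 h10.
Qed.

End Gen.

Fixpoint coefF (p : LP) (w : word) : int :=
  match p with
  | [::] => 0
  | t :: p' => if red t.2 == w then t.1 + coefF p' w else coefF p' w
  end.

Definition lp_eqb (p q : LP) : bool :=
  all (fun t => coefF p (red t.2) == coefF q (red t.2)) (p ++ q).

Lemma coefFE p w : coefF p w = coef p w.
Proof. by elim: p => [|t p IH] /=; rewrite /coef ?big_nil // big_cons -/(coef p w) IH. Qed.

Lemma lp_eqb_sound p q : lp_eqb p q -> lp_eq p q.
Proof.
move=> /allP h w; case: (boolP (w \in [seq red t.2 | t <- p ++ q])) => hw.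
  by case/mapP: hw => t tin ->; rewrite -!coefFE; apply/eqP/h.
rewrite !coef_notin //; apply: contra hw; by rewrite map_cat mem_cat => ->; rewrite ?orbT.
Qed.

Lemma toT_zero : toT [::] = 0. Proof. by []. Qed.

Lemma toT_lpeqb p q : lp_eqb p q -> toT p = toT q.
Proof. by move=> h; apply/toT_eqE/lp_eqb_sound. Qed.

Ltac foldT := repeat progress rewrite -?toT_mulE -?toT_negE -?toT_add -?toT_one -?toT_pow -?toT_zero.
Ltac checkT := foldT; apply: toT_lpeqb; vm_compute; reflexivity.

Definition Cilp : LP := lp_word [:: gy; gx; gyi; gxi].
Notation Ct := (toT Ccoef).
Notation Cit := (toT Cilp).

Lemma CCi : Ct * Cit = 1. Proof. checkT. Qed.
Lemma CiC : Cit * Ct = 1. Proof. checkT. Qed.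

Definition pos (p : LP) : bool := all (fun t => 0 <= t.1) p.

Lemma pos_add p q : pos p -> pos q -> pos (lp_add p q).
Proof. by move=> hp hq; rewrite /pos /lp_add all_cat; apply/andP. Qed.

Lemma pos_mul p q : pos p -> pos q -> pos (lp_mul p q).
Proof.
move=> /allP hp /allP hq; apply/allP => x /allpairsP [[t s] [/= tin sin ->]] /=.
by apply: mulr_ge0; [apply: hp | apply: hq].
Qed.

Lemma pos_nonneg p : pos p -> lp_nonneg p.
Proof.
move=> /allP hp w; rewrite /coef big_seq_cond; apply: sumr_ge0 => t /andP[tin _].
exact: hp.
Qed.

Lemma pos_C : pos Ccoef. Proof. by []. Qed.

Section Fwd.
Variables (a0 a1 A B M Mp QR QL E o0 : LP).

Definition stS (s : LP * LP * LP * LP) : LP * LP * LP * LP :=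
  let P := s.1.1.1 in let Q := s.1.1.2 in let L := s.1.2 in let E' := s.2 in
  (lp_add (lp_mul P A) Q,
   lp_add (lp_mul P M) (lp_mul Q B),
   lp_add (lp_mul (lp_mul Mp Ccoef) P) (lp_mul (lp_mul B Ccoef) L),
   lp_add (lp_add (lp_add (lp_add
     (lp_mul (lp_mul (lp_mul (lp_mul (lp_mul P M) Ccoef) A) Ccoef) P)
     (lp_mul (lp_mul (lp_mul P M) Ccoef) L)) E')
     (lp_mul (lp_mul (lp_mul Q Mp) Ccoef) P))
     (lp_mul (lp_mul (lp_mul Q B) Ccoef) L)).

Fixpoint stL (j : nat) : LP * LP * LP * LP :=
  match j with 0%N => (a1, QR, QL, E) | j'.+1 => stS (stL j') end.

Definition PL j := (stL j).1.1.1.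
Definition QRL j := (stL j).1.1.2.
Definition QLL j := (stL j).1.2.
Definition EL j := (stL j).2.

Definition aL k := match k with 0%N => a0 | k'.+1 => PL k' end.
Definition oL k := match k with
  | 0%N => o0
  | k'.+1 => lp_add (lp_mul (lp_mul (lp_mul (PL k') A) Ccoef) (PL k')) (EL k')
  end.

Hypotheses (hI : Inv Ct Cit (toT A) (toT B) (toT a0) (toT a1))
  (hM : toT M = toT A * toT B - Cit) (hMp : toT Mp = toT B * Ct * toT A - 1)
  (hQR : toT QR = toT a1 * toT B - toT a0 * Cit)
  (hQL : toT QL = toT B * Ct * toT a1 - Ct * toT a0)
  (hE : toT E = toT QR * Ct * toT a1 - 1)
  (ho : toT o0 = toT a1 * Ct * toT a0 - 1).

Let aT := aseq Cit (toT A) (toT B) (toT a0) (toT a1).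

Lemma fwd_struct j : [/\ toT (PL j) = aT j.+1, toT (QRL j) = aT j.+1 * toT B - aT j * Cit,
               toT (QLL j) = toT B * Ct * aT j.+1 - Ct * aT j &
               toT (EL j) = toT (QRL j) * Ct * aT j.+1 - 1].
Proof.
apply: (@pos_struct _ Ct Cit (toT A) (toT B) CCi CiC (toT M) (toT Mp) hM hMp
          _ _ (fun i => toT (PL i)) (fun i => toT (QRL i)) (fun i => toT (QLL i))
          (fun i => toT (EL i)) hI) => //= i.
- by rewrite /PL /= toT_add toT_mulE.
- by rewrite /QRL /= toT_add !toT_mulE.
- by rewrite /QLL /= toT_add !toT_mulE.
- by rewrite /EL /= !toT_add !toT_mulE.
Qed.

Lemma fwd_a k : toT (aL k) = aT k.
Proof. by case: k => [|k] //=; case: (fwd_struct k). Qed.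

Lemma fwd_o k : toT (oL k) = aT k.+1 * Ct * aT k - 1.
Proof.
case: k => [|k] //=; case: (fwd_struct k) => e1 e2 e3 e4.
rewrite toT_add !toT_mulE.
exact: (@odd_formula _ Ct Cit (toT A) (toT B) CCi CiC _ _
   (fun j => toT (PL j)) (fun j => toT (QRL j)) (fun j => toT (EL j)) k e1 e2 e4).
Qed.

Lemma fwd_X k : toT (oL k.+1) * Ct * toT (oL k) = 1 + toT (aL k.+1) ^+ 4.
Proof. by rewrite !fwd_o fwd_a; exact: (X_all CCi CiC hI k). Qed.

Lemma fwd_odd k : toT (aL k.+1) * Ct * toT (aL k) = 1 + toT (oL k).
Proof. by rewrite !fwd_a fwd_o addrC subrK. Qed.

Hypotheses (p0 : pos a0) (p1 : pos a1) (pA : pos A) (pB : pos B) (pM : pos M) (pMp : pos Mp)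
  (pQR : pos QR) (pQL : pos QL) (pE : pos E) (po : pos o0).

Lemma pos_st j : [&& pos (PL j), pos (QRL j), pos (QLL j) & pos (EL j)].
Proof.
elim: j => [|j /and4P[h1 h2 h3 h4]]; first by apply/and4P.
rewrite /PL /QRL /QLL /EL /=.
apply/and4P; split; repeat (apply: pos_add || apply: pos_mul); done.
Qed.

Lemma pos_aL k : pos (aL k).
Proof. by case: k => [|k] //=; case/and4P: (pos_st k). Qed.

Lemma pos_oL k : pos (oL k).
Proof.
case: k => [|k] //=.
case/and4P: (pos_st k) => h1 h2 h3 h4.
by repeat (apply: pos_add || apply: pos_mul).
Qed.

End Fwd.

Section FwdRel.
Variables (a0 a1 A B M Mp QR QL E o0 : LP).
Hypotheses (hI : Inv Ct Cit (toT A) (toT B) (toT a0) (toT a1))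
  (hM : toT M = toT A * toT B - Cit) (hMp : toT Mp = toT B * Ct * toT A - 1)
  (hQR : toT QR = toT a1 * toT B - toT a0 * Cit)
  (hQL : toT QL = toT B * Ct * toT a1 - Ct * toT a0)
  (hE : toT E = toT QR * Ct * toT a1 - 1)
  (ho : toT o0 = toT a1 * Ct * toT a0 - 1).

Definition Gs m := if odd m then oL a1 A B M Mp QR QL E o0 m./2
                   else aL a0 a1 A B M Mp QR QL E m./2.

Lemma Gs_even k : Gs (k.*2) = aL a0 a1 A B M Mp QR QL E k.
Proof. by rewrite /Gs odd_double /= doubleK. Qed.

Lemma Gs_odd k : Gs (k.*2).+1 = oL a1 A B M Mp QR QL E o0 k.
Proof. by rewrite /Gs /= odd_double /= uphalf_double. Qed.

Lemma fwd_rel j : toT (Gs j.+2) * Ct * toT (Gs j) = 1 + toT (Gs j.+1) ^+ (if odd j then 4 else 1).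
Proof.
have := odd_double_half j; case: (boolP (odd j)) => hj /= e; rewrite -e.
- by rewrite -doubleS !Gs_odd Gs_even; exact: fwd_X.
- by rewrite -doubleS !Gs_even Gs_odd; exact: fwd_odd.
Qed.
End FwdRel.

Definition a014 : LP := [:: (1, [:: gy; gx; gyi])].
Definition a114 : LP := [:: (1, [:: gxi]); (1, [:: gy; gxi])].
Definition A14 : LP := [:: (1, [:: gxi; gxi]); (1, [:: gxi; gyi; gxi]); (1, [:: gy; gxi; gxi]); (1, [:: gy; gxi; gyi; gxi])].
Definition B14 : LP := [:: (1, [:: gx; gx; gx; gyi; gxi])].
Definition M14 : LP := [:: (1, [:: gx; gyi; gxi]); (1, [:: gxi; gyi; gx; gx; gyi; gxi]); (1, [:: gy; gxi; gyi; gx; gx; gyi; gxi])].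
Definition Mp14 : LP := [:: (1, [:: gx; gyi; gxi]); (1, [:: gx; gx; gyi; gxi; gxi]); (1, [:: gx; gx; gyi; gxi; gyi; gxi])].
Definition QR14 : LP := [:: (1, [:: gx; gx; gyi; gxi])].
Definition QL14 : LP := [:: (1, [:: gx; gx; gyi; gxi])].
Definition E14 : LP := [:: (1, [:: gx; gyi; gxi])].
Definition o014 : LP := [:: (1, [:: gy])].
Definition a041 : LP := [:: (1, [:: gy])].
Definition a141 : LP := [:: (1, [:: gyi; gxi]); (1, [:: gx; gyi; gxi]); (1, [:: gy; gy; gy; gxi])].
Definition A41 : LP := [:: (1, [:: gyi; gyi; gxi]); (1, [:: gy; gy; gxi]); (1, [:: gyi; gx; gyi; gxi]); (1, [:: gx; gyi; gyi; gxi])].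
Definition B41 : LP := [:: (1, [:: gx; gyi; gx; gyi; gxi])].
Definition M41 : LP := [:: (1, [:: gyi; gyi; gyi; gx; gyi; gxi]); (1, [:: gyi; gx; gyi; gyi; gx; gyi; gxi]); (1, [:: gx; gyi; gyi; gyi; gx; gyi; gxi])].
Definition Mp41 : LP := [:: (1, [:: gx; gyi; gyi; gyi; gyi; gxi]); (1, [:: gx; gyi; gyi; gyi; gx; gyi; gxi]); (1, [:: gx; gyi; gyi; gx; gyi; gyi; gxi])].
Definition QR41 : LP := [:: (1, [:: gyi; gyi; gx; gyi; gxi]); (1, [:: gx; gyi; gyi; gx; gyi; gxi])].
Definition QL41 : LP := [:: (1, [:: gx; gyi; gyi; gyi; gxi]); (1, [:: gx; gyi; gyi; gx; gyi; gxi])].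
Definition E41 : LP := [:: (1, [:: gxi]); (1, [:: gyi; gyi; gyi; gyi; gxi]); (1, [:: gyi; gyi; gyi; gx; gyi; gxi]); (1, [:: gx; gyi; gyi; gyi; gyi; gxi]); (1, [:: gx; gyi; gyi; gyi; gx; gyi; gxi])].
Definition o041 : LP := [:: (1, [:: gxi]); (1, [:: gy; gy; gy; gy; gxi])].


Lemma I14 : Inv Ct Cit (toT A14) (toT B14) (toT a014) (toT a114).
Proof. by split; rewrite /iL /iL2 /iH /iJ /nxt /K; checkT. Qed.
Lemma hM14 : toT M14 = toT A14 * toT B14 - Cit. Proof. checkT. Qed.
Lemma hMp14 : toT Mp14 = toT B14 * Ct * toT A14 - 1. Proof. checkT. Qed.
Lemma hQR14 : toT QR14 = toT a114 * toT B14 - toT a014 * Cit. Proof. checkT. Qed.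
Lemma hQL14 : toT QL14 = toT B14 * Ct * toT a114 - Ct * toT a014. Proof. checkT. Qed.
Lemma hE14 : toT E14 = toT QR14 * Ct * toT a114 - 1. Proof. checkT. Qed.
Lemma ho14 : toT o014 = toT a114 * Ct * toT a014 - 1. Proof. checkT. Qed.

Lemma I41 : Inv Ct Cit (toT A41) (toT B41) (toT a041) (toT a141).
Proof. by split; rewrite /iL /iL2 /iH /iJ /nxt /K; checkT. Qed.
Lemma hM41 : toT M41 = toT A41 * toT B41 - Cit. Proof. checkT. Qed.
Lemma hMp41 : toT Mp41 = toT B41 * Ct * toT A41 - 1. Proof. checkT. Qed.
Lemma hQR41 : toT QR41 = toT a141 * toT B41 - toT a041 * Cit. Proof. checkT. Qed.
Lemma hQL41 : toT QL41 = toT B41 * Ct * toT a141 - Ct * toT a041. Proof. checkT. Qed.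
Lemma hE41 : toT E41 = toT QR41 * Ct * toT a141 - 1. Proof. checkT. Qed.
Lemma ho41 : toT o041 = toT a141 * Ct * toT a041 - 1. Proof. checkT. Qed.

Definition aw (l : letter) : word :=
  match l with
  | (false, false) => [:: gy; gx; gy; gxi; gyi]
  | (false, true) => [:: gy; gx; gyi; gxi; gyi]
  | (true, false) => [:: gy; gx; gyi]
  | (true, true) => [:: gy; gxi; gyi]
  end.

Definition iw (w : word) : word := flatten (rev (map aw w)).

Lemma iw_cat u v : iw (u ++ v) = iw v ++ iw u.
Proof. by rewrite /iw map_cat rev_cat flatten_cat. Qed.

Lemma iw_cons a w : iw (a :: w) = iw w ++ aw a.
Proof. by rewrite -cat1s iw_cat /iw /= cats0. Qed.

Lemma aw_inv l : aw (inv_letter l) = winv (aw l).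
Proof. by case: l => [[] []]. Qed.

Lemma red_iw_aw l : red (iw (aw l)) = [:: l].
Proof. by case: l => [[] []]. Qed.

Lemma red_iw_red w : red (iw w) = red (iw (red w)).
Proof.
elim: w => [|a w IH] //.
rewrite iw_cons red_catl IH -red_catl -iw_cons red_cons.
have : rdc (red w) by apply: rdc_red.
case: (red w) => [|b r] //= _.
case: eqP => [->|_] //.
by rewrite !iw_cons aw_inv -catA red_catr red_winvl cats0.
Qed.

Lemma iw_invol w : red (iw (iw w)) = red w.
Proof.
elim: w => [|a w IH] //.
rewrite iw_cons iw_cat red_cat red_iw_aw IH red_cons.
by rewrite -[[:: a] ++ _]/(a :: red w) red_cons red_red.
Qed.

Definition iotaL (p : LP) : LP := [seq (t.1, iw t.2) | t <- p].

Lemma coef_iotaL p w : red w = w -> coef (iotaL p) w = coef p (red (iw w)).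
Proof.
move=> hw; rewrite /coef /iotaL big_map /=; apply: eq_bigl => t /=.
apply/eqP/eqP => h.
  by rewrite -iw_invol red_iw_red h.
by rewrite red_iw_red h -red_iw_red iw_invol.
Qed.

Lemma iota_eq p q : lp_eq p q -> lp_eq (iotaL p) (iotaL q).
Proof.
move=> h w; case: (eqVneq (red w) w) => hw; last by rewrite !coef_nred.
by rewrite !coef_iotaL // h.
Qed.

Lemma iota_mul p q : lp_eq (iotaL (lp_mul p q)) (lp_mul (iotaL q) (iotaL p)).
Proof.
move=> w; rewrite /coef /iotaL /lp_mul big_map big_mkcond big_allpairs_dep /=.
rewrite [RHS]big_mkcond big_allpairs_dep /= big_map.
under [RHS]eq_bigr do rewrite big_map.
rewrite [RHS]exchange_big /=; apply: eq_bigr => t _; apply: eq_bigr => s _.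
by rewrite iw_cat mulrC.
Qed.

Lemma iota_add p q : iotaL (lp_add p q) = lp_add (iotaL p) (iotaL q).
Proof. by rewrite /iotaL /lp_add map_cat. Qed.

Lemma pos_iota p : pos (iotaL p) = pos p.
Proof. by rewrite /pos /iotaL all_map. Qed.

Definition iotaT (x : FG) : FG := toT (iotaL (val x)).

Lemma iotaT_toT p : iotaT (toT p) = toT (iotaL p).
Proof. by apply/toT_eqE/iota_eq/nf_coef. Qed.

Lemma iotaT_add x y : iotaT (x + y) = iotaT x + iotaT y.
Proof.
by rewrite -(toTvalK x) -(toTvalK y) -toT_add !iotaT_toT iota_add toT_add.
Qed.

Lemma iotaT_mul x y : iotaT (x * y) = iotaT y * iotaT x.
Proof.
rewrite -(toTvalK x) -(toTvalK y) -toT_mulE !iotaT_toT -toT_mulE.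
exact/toT_eqE/iota_mul.
Qed.

Lemma iotaT_one : iotaT 1 = 1.
Proof. by rewrite -toT_one iotaT_toT. Qed.

Lemma iotaT_pow x n : iotaT (x ^+ n) = iotaT x ^+ n.
Proof.
elim: n => [|n IH]; first by rewrite !expr0 iotaT_one.
by rewrite exprS iotaT_mul IH exprSr.
Qed.

Definition w_yxY : LP := lp_word [:: gy; gx; gyi].
Definition w_y : LP := lp_word [:: gy].

Lemma iota_C : iotaT Ct = Ct.
Proof. rewrite iotaT_toT; apply: toT_lpeqb; vm_compute; reflexivity. Qed.
Lemma iota_yxY : iotaT (toT w_yxY) = toT w_y.
Proof. rewrite iotaT_toT; apply: toT_lpeqb; vm_compute; reflexivity. Qed.
Lemma iota_y : iotaT (toT w_y) = toT w_yxY.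
Proof. rewrite iotaT_toT; apply: toT_lpeqb; vm_compute; reflexivity. Qed.

Lemma PS (k : nat) : Posz k + 1 = Posz k.+1.
Proof. by rewrite -[1]/(Posz 1) -PoszD addn1. Qed.
Lemma PSm (k : nat) : Posz k.+1 - 1 = Posz k.
Proof. by rewrite -PS addrK. Qed.
Lemma NSm (k : nat) : Negz k - 1 = Negz k.+1.
Proof. by rewrite !NegzE -[in RHS]PS opprD. Qed.
Lemma NSp (k : nat) : Negz k.+1 + 1 = Negz k.
Proof. by rewrite -NSm subrK. Qed.

Definition Fwd (b c : nat) (F : nat -> LP) :=
  [/\ forall k, pos (F k), F 0%N = w_yxY, F 1%N = w_y &
      forall i, toT (F i.+2) * Ct * toT (F i) = 1 + toT (F i.+1) ^+ (if odd i.+1 then b else c)].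

Lemma bc_systemE b c (R : int -> LP) :
  (forall n : int, toT (R (n + 1)) * Ct * toT (R (n - 1)) = 1 + toT (R n) ^+ (if odd `|n|%N then b else c)) ->
  bc_system b c Ccoef R.
Proof.
move=> h n; apply/toT_eqE; rewrite toT_add toT_one toT_pow !toT_mulE; exact: h.
Qed.

Lemma full b c F G : Fwd b c F -> Fwd c b G ->
  exists R : int -> LP,
    lp_eq (R 0) (lp_word [:: gy; gx; gyi]) /\ lp_eq (R 1) (lp_word [:: gy]) /\
    bc_system b c Ccoef R /\ (forall n : int, lp_nonneg (R n)).
Proof.
case=> pF F0 F1 hF [pG G0 G1 hG].
pose R (n : int) := match n with Posz k => F k | Negz k => iotaL (G k.+2) end.
exists R; split; first by rewrite /R /= F0.
split; first by rewrite /R /= F1.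
split; last first.
  by case=> k; apply: pos_nonneg; rewrite /R ?pos_iota.
apply: bc_systemE; case=> [[|k]|k].
-
  have -> : (Posz 0 + 1) = Posz 1 by [].
  have -> : (Posz 0 - 1) = Negz 0 by [].
  rewrite /R F1 F0 -iotaT_toT.
  have := congr1 iotaT (hG 0%N); rewrite iotaT_mul iotaT_mul iotaT_add iotaT_one iotaT_pow.
  by rewrite G0 G1 iota_C iota_yxY iota_y mulrA => h; exact: h.
- rewrite PS PSm; exact: hF.
- rewrite NSm.
  have hG' := congr1 iotaT (hG k.+1).
  rewrite iotaT_mul iotaT_mul iotaT_add iotaT_one iotaT_pow iota_C !iotaT_toT in hG'.
  case: k hG' => [|j] hG'.
  + have -> : (Negz 0 + 1) = Posz 0 by [].
    rewrite /R /= F0; move: hG'; rewrite G1 -[toT (iotaL w_y)]iotaT_toT iota_y mulrA.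
    by move=> h; exact: h.
  + rewrite NSp.
    rewrite /R /=; move: hG'; rewrite mulrA /=.
    by case: (odd j) => h; exact: h.
Qed.

Definition F14 (n : nat) : LP := Gs a014 a114 A14 B14 M14 Mp14 QR14 QL14 E14 o014 n.
Definition F41 (n : nat) : LP :=
  match n with 0%N => w_yxY | n'.+1 => Gs a041 a141 A41 B41 M41 Mp41 QR41 QL41 E41 o041 n' end.

Lemma Fwd14 : Fwd 1 4 F14.
Proof.
split=> //.
- move=> k; rewrite /F14 /Gs; case: ifP => _; [apply: pos_oL | apply: pos_aL]; by [].
- move=> i; have := fwd_rel I14 hM14 hMp14 hQR14 hQL14 hE14 ho14 i.
  rewrite /F14 /=; case: (odd i) => h; exact: h.
Qed.

Lemma rel41_0 : toT o041 * Ct * toT w_yxY = 1 + toT w_y ^+ 4.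
Proof. checkT. Qed.

Lemma Fwd41 : Fwd 4 1 F41.
Proof.
split=> //.
- case=> [|k] //; rewrite /F41 /Gs; case: ifP => _; [apply: pos_oL | apply: pos_aL]; by [].
- case=> [|j]; first exact: rel41_0.
  have := fwd_rel I41 hM41 hMp41 hQR41 hQL41 hE41 ho41 j.
  rewrite /F41 /=; case: (odd j) => h; exact: h.
Qed.

Lemma odd_abs_sub1 (n : int) : odd `|n - 1|%N = ~~ odd `|n|%N.
Proof.
case: n => [[|k]|k] //.
- by rewrite PSm /= negbK.
- by rewrite NSm /= negbK.
Qed.

Lemma shift b c (R : int -> LP) : bc_system c b Ccoef R ->
  bc_system b c Ccoef (fun n => R (n - 1)).
Proof.
move=> h n; have := h (n - 1).
have -> : n + 1 - 1 = n - 1 + 1 by rewrite addrK subrK.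
rewrite odd_abs_sub1; case: (odd _) => //.
Qed.

Unset Implicit Arguments.
Theorem theorem4p13 (b c : nat) :
  (b, c) = (1%N, 4%N) \/ (b, c) = (4%N, 1%N) ->
  (exists R : int -> LP,
      lp_eq (R 0) (lp_word [:: gy; gx; gyi]) /\
      lp_eq (R 1) (lp_word [:: gy]) /\
      bc_system b c Ccoef R /\
      (forall n : int, lp_nonneg (R n))) /\
  (exists R : int -> LP,
      lp_eq (R 1) (lp_word [:: gy; gx; gyi]) /\
      lp_eq (R 2) (lp_word [:: gy]) /\
      bc_system b c Ccoef R /\
      (forall n : int, lp_nonneg (R n))).
Proof.
have part2 : forall b c, (exists R : int -> LP,
      lp_eq (R 0) (lp_word [:: gy; gx; gyi]) /\
      lp_eq (R 1) (lp_word [:: gy]) /\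
      bc_system c b Ccoef R /\
      (forall n : int, lp_nonneg (R n))) ->
   (exists R : int -> LP,
      lp_eq (R 1) (lp_word [:: gy; gx; gyi]) /\
      lp_eq (R 2) (lp_word [:: gy]) /\
      bc_system b c Ccoef R /\
      (forall n : int, lp_nonneg (R n))).
  move=> b' c' [R [h0 [h1 [hs hn]]]]; exists (fun n => R (n - 1)); split; [|split; [|split]].
  - by have -> : (1 - 1 : int) = 0 by [].
  - by have -> : (2 - 1 : int) = 1 by [].
  - exact: shift.
  - by move=> n.
case=> [[-> ->]|[-> ->]]; split.
- exact: full Fwd14 Fwd41.
- apply: part2; exact: full Fwd41 Fwd14.
- exact: full Fwd41 Fwd14.
- apply: part2; exact: full Fwd14 Fwd41.
Qed.
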